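(* Let $s<-s^{neg}$ and suppose $m\in P\cap\mathbb Z^n$ lies in a negative-definite island $U$ of $g_s$. Then the pointwise norm of $\sigma^m_s$, which is $\mathbb T^n$-invariant and hence a function of $x$, is minimized at $m$ and is strictly increasing along each ray emanating from $m$, from $m$ up to the point where the ray meets the boundary of $U$.
   Context: Let $P=\{x\in\mathbb R^n:\ell_j(x)=\langle\nu_j,x\rangle+\lambda_j\ge0,\ j=1,\dots,r\}$ be a Delzant polytope with interior $\check P$, $(X_P,\omega)$ the associated compact symplectic toric manifold with action-angle coordinates $(x,\theta)$ on $\check X_P\cong\check P\times\mathbb T^n$, $\omega=\sum dx^j\wedge d\theta_j$. $L$ is a Hermitian prequantum line bundle with unitary trivialization $\mathbbm1$ over $\check X_P$ and $\nabla\mathbbm1=-i\sum x^jd\theta_j\mathbbm1$. Let $g_P=\frac12\sum\ell_j\log\ell_j$, $\psi\in C^\infty(P)$ strongly convex (positive definite Hessian on $P$), $g_s=g_P+s\psi$ with Hessian $H_s$ and $y_s=\partial g_s/\partial x$. The polarized section $\sigma^m_s$ is given on $\check X_P$ by $\sigma^m_s=e^{m\cdot(y_s+i\theta)}e^{-(x\cdot y_s-g_s)}\mathbbm1$, so its pointwise norm is $|\sigma^m_s|=e^{(m-x)\cdot y_s+g_s}$. A negative-definite island of $g_s$ is a connected component of $\{x\in\check P:H_s(x)\text{ negative definite}\}$. $s^{cvx}\ge0$ denotes the smallest number such that $g_s$ is convex on $\check P$ for all $s>-s^{cvx}$, and $s^{neg}\ge s^{cvx}$ the smallest number such that for all $s<-s^{neg}$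 the function $g_s$ has a nonempty negative-definite island. *)

(* Defs.v *)
From HB Require Import structures.
From mathcomp Require Import all_boot all_order all_algebra.
From mathcomp Require Import all_classical all_reals all_analysis.
Set Implicit Arguments. Unset Strict Implicit. Unset Printing Implicit Defensive.
Import Order.TTheory GRing.Theory Num.Theory.
Import numFieldNormedType.Exports.
Local Open Scope classical_set_scope.
Local Open Scope ring_scope.

Section Toric.
Variable R : realType.
Variables n r : nat.

Definition ebasis (i : 'I_n) : 'rV[R]_n := delta_mx 0 i.

Definition intpt (m : 'I_n -> int) : 'rV[R]_n := \row_k (m k)%:~R.

Definition dotp (u v : 'rV[R]_n) : R := \sum_k u 0 k * v 0 k.

Definition ell (nu : 'I_r -> 'I_n -> int) (lam : 'I_r -> R) (j : 'I_r)
  (x : 'rV[R]_n) : R := \sum_k (nu j k)%:~R * x 0 k + lam j.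

Definition polytope nu lam : set 'rV[R]_n := [set x | forall j, 0 <= ell nu lam j x].

Definition vertex (A : set 'rV[R]_n) (x : 'rV[R]_n) : Prop :=
  A x /\ forall y z t, A y -> A z -> 0 < t < 1 -> x = t *: y + (1 - t) *: z -> y = z.

(* Delzant polytope: compact, with nonempty interior, irredundant description
   (each j defines a facet), and at each vertex exactly n facets meet whose
   normals form a Z-basis of Z^n. *)
Definition delzant nu lam : Prop :=
  let P := polytope nu lam in
  bounded_set P /\ (interior P !=set0) /\
  (forall j, exists x, P x /\ ell nu lam j x = 0 /\ forall k, k != j -> 0 < ell nu lam k x) /\
  (forall x, vertex P x ->
     exists f : 'I_n -> 'I_r, injective f /\
       (forall j, ell nu lam j x = 0 <-> exists i, f i = j) /\
       (\det (\matrix_(i, k) nu (f i) k) = 1 \/ \det (\matrix_(i, k) nu (f i) k) = -1)).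

(* iterated directional derivatives; C^oo = all of them Frechet differentiable *)
Fixpoint iterD (vs : seq 'rV[R]_n) (f : 'rV[R]_n -> R) : 'rV[R]_n -> R :=
  match vs with
  | [::] => f
  | v :: vs' => fun x => derive (iterD vs' f) x v
  end.

Definition smooth (f : 'rV[R]_n -> R) : Prop :=
  forall vs x, differentiable (iterD vs f) x.

Definition grad (f : 'rV[R]_n -> R) (x : 'rV[R]_n) : 'rV[R]_n :=
  \row_k derive f x (ebasis k).

Definition hessian (f : 'rV[R]_n -> R) (x : 'rV[R]_n) : 'M[R]_n :=
  \matrix_(i, k) derive (fun z => derive f z (ebasis k)) x (ebasis i).

Definition posdef (H : 'M[R]_n) : Prop :=
  forall v : 'rV[R]_n, v != 0 -> 0 < (v *m H *m v^T) 0 0.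
Definition negdef (H : 'M[R]_n) : Prop :=
  forall v : 'rV[R]_n, v != 0 -> (v *m H *m v^T) 0 0 < 0.

Definition gP nu lam (x : 'rV[R]_n) : R :=
  2^-1 * \sum_j ell nu lam j x * ln (ell nu lam j x).

Definition gs nu lam (psi : 'rV[R]_n -> R) (s : R) (x : 'rV[R]_n) : R :=
  gP nu lam x + s * psi x.

(* pointwise norm |sigma^m_s| = exp((m - x).y_s + g_s), as a function of x *)
Definition sigma_norm nu lam psi s (m : 'I_n -> int) (x : 'rV[R]_n) : R :=
  expR (dotp (intpt m - x) (grad (gs nu lam psi s) x) + gs nu lam psi s x).

Definition negdef_region nu lam psi s : set 'rV[R]_n :=
  [set x | interior (polytope nu lam) x /\ negdef (hessian (gs nu lam psi s) x)].

Definition island nu lam psi s (U : set 'rV[R]_n) : Prop :=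
  exists x0, negdef_region nu lam psi s x0 /\
             U = connected_component (negdef_region nu lam psi s) x0.

Definition has_island nu lam psi s : Prop :=
  exists U, island nu lam psi s U /\ U !=set0.

Definition is_sneg nu lam psi (t : R) : Prop :=
  0 <= t /\ (forall s, s < - t -> has_island nu lam psi s) /\
  (forall t', 0 <= t' -> (forall s, s < - t' -> has_island nu lam psi s) -> t <= t').

End Toric.

(* Main.v *)
Require Import Defs.
From HB Require Import structures.
From mathcomp Require Import all_boot all_order all_algebra.
From mathcomp Require Import all_classical all_reals all_analysis.
From mathcomp Require Import ring lra.
Import Order.TTheory GRing.Theory Num.Theory.
Import numFieldNormedType.Exports.
Local Open Scope classical_set_scope.
Local Open Scope ring_scope.
Set Implicit Arguments. Unset Strict Implicit. Unset Printing Implicit Defensive.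



Section NearEq.
Variable R : realType.
Variables V W : normedModType R.

Lemma zero_near_diff (h : V -> W) x :
  (\forall z \near x, h z = 0) -> differentiable h x.
Proof.
move=> h0.
have hx : h x = 0 := nbhs_singleton h0.
have L : h \o shift x = cst (h x) + ('d (cst (0:W)) x : V -> W) +o_ 0 id.
  rewrite diff_cst hx; apply/eqaddoP => e e0.
  have : \forall z \near (0:V), h (z + x) = 0.
    rewrite (near_shift x); near=> z; rewrite /= sub0r subrK; near: z; exact: h0.
  apply: filterS => z /= hz. rewrite (_ : (_ - _) z = 0) ?normr0; last by rewrite !fctE /= hz addr0 subr0.
  by rewrite mulr_ge0 // ltW.
have E : 'd h x = 'd (cst (0:W)) x :> (V -> W).
  apply: diff_unique => //; exact: diff_continuous (differentiable_cst _ _).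
apply/diff_locallyP; rewrite E; split => //.
exact: diff_continuous (differentiable_cst _ _).
Unshelve. all: by end_near.
Qed.

Lemma near_eq_differentiable (f g : V -> W) x :
  (\forall z \near x, f z = g z) -> differentiable f x -> differentiable g x.
Proof.
move=> fg df.
have -> : g = f + (g - f) by apply/funext => z; rewrite !fctE addrC subrK.
apply: differentiableD => //; apply: zero_near_diff.
by apply: filterS fg => z /= fgz; rewrite !fctE fgz subrr.
Qed.

Lemma near_eq_continuous (f g : V -> W) x :
  (\forall z \near x, f z = g z) -> {for x, continuous f} -> {for x, continuous g}.
Proof.
move=> fg cf.
have -> : g = f + (g - f) by apply/funext => z; rewrite !fctE addrC subrK.
apply: continuousD => //; apply: differentiable_continuous; apply: zero_near_diff.
by apply: filterS fg => z /= fgz; rewrite !fctE fgz subrr.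
Qed.
End NearEq.



Section C2.
Variable R : realType.
Variable V : normedModType R.

Definition C2on (O : set V) (F : V -> R) := forall x, O x ->
  differentiable F x /\ (forall v, differentiable (fun z => 'D_v F z) x) /\
  (forall v w, {for x, continuous (fun z => 'D_w (fun y => 'D_v F y) z)}).

Lemma open_near (O : set V) x : open O -> O x -> \forall z \near x, O z.
Proof. by move=> oO Ox; apply: open_nbhs_nbhs; split. Qed.

Lemma eqon_near (O : set V) (f g : V -> R) x : open O -> O x ->
  (forall z, O z -> f z = g z) -> \forall z \near x, f z = g z.
Proof. by move=> oO Ox fg; apply: filterS (open_near oO Ox) => z /fg. Qed.

Lemma eqon_derive (O : set V) (f g : V -> R) v : open O ->
  (forall z, O z -> f z = g z) -> forall z, O z -> 'D_v f z = 'D_v g z.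
Proof. by move=> oO fg z Oz; apply: near_eq_derive; exact: eqon_near fg. Qed.

Lemma C2on_sub (O O' : set V) F : O `<=` O' -> C2on O' F -> C2on O F.
Proof. by move=> OO' c x /OO' /c. Qed.

Lemma C2on_eq (O : set V) F G : open O -> (forall z, O z -> F z = G z) ->
  C2on O F -> C2on O G.
Proof.
move=> oO FG c x Ox; have [d1 [d2 d3]] := c x Ox.
have e1 v := eqon_derive v oO FG.
have e2 v w := eqon_derive w oO (e1 v).
split; first exact: near_eq_differentiable (eqon_near oO Ox FG) d1.
split=> [v|v w]; first exact: near_eq_differentiable (eqon_near oO Ox (e1 v)) (d2 v).
exact: near_eq_continuous (eqon_near oO Ox (e2 v w)) (d3 v w).
Qed.

Lemma C2on_cst (O : set V) (c : R) : C2on O (fun=> c).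
Proof.
have e v : (fun z => 'D_v (fun=> c) z) = fun=> 0.
  by apply/funext => z; exact: derive_cst.
move=> x Ox; split; first exact: differentiable_cst.
split=> [v|v w]; rewrite e; first exact: differentiable_cst.
have -> : (fun z => 'D_w (fun=> (0:R)) z) = fun=> 0 by apply/funext=> z; exact: derive_cst.
exact: cst_continuous.
Qed.

Lemma C2on_add (O : set V) F G : open O -> C2on O F -> C2on O G ->
  C2on O (fun z => F z + G z).
Proof.
move=> oO cF cG.
have e1 v z : O z -> 'D_v (fun z => F z + G z) z = 'D_v F z + 'D_v G z.
  move=> Oz; have [dF _] := cF z Oz; have [dG _] := cG z Oz.
  by rewrite (deriveD (diff_derivable dF) (diff_derivable dG)).
have e2 v w z : O z -> 'D_w (fun y => 'D_v (fun z => F z + G z) y) z =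
    'D_w (fun y => 'D_v F y) z + 'D_w (fun y => 'D_v G y) z.
  move=> Oz; rewrite (eqon_derive w oO (e1 v) Oz).
  have [_ [dF _]] := cF z Oz; have [_ [dG _]] := cG z Oz.
  by rewrite (deriveD (diff_derivable (dF v)) (diff_derivable (dG v))).
move=> x Ox; have [dF1 [dF2 dF3]] := cF x Ox; have [dG1 [dG2 dG3]] := cG x Ox.
split; first exact: differentiableD dF1 dG1.
split=> [v|v w].
  apply: near_eq_differentiable (eqon_near oO Ox (fun z Oz => esym (e1 v z Oz))) _.
  exact: differentiableD (dF2 v) (dG2 v).
apply: near_eq_continuous (eqon_near oO Ox (fun z Oz => esym (e2 v w z Oz))) _.
exact: continuousD (dF3 v w) (dG3 v w).
Qed.

Lemma differentiableZ' (F : V -> R) (c : R) x : differentiable F x ->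
  differentiable (fun z => c * F z) x.
Proof.
move=> dF; rewrite (_ : (fun z => c * F z) = c *: F); first exact: differentiableZ.
by apply/funext => z.
Qed.

Lemma C2on_scale (O : set V) (c : R) F : open O -> C2on O F ->
  C2on O (fun z => c * F z).
Proof.
move=> oO cF.
have e1 v z : O z -> 'D_v (fun z => c * F z) z = c * 'D_v F z.
  move=> Oz; have [dF _] := cF z Oz.
  by rewrite (deriveZ c (diff_derivable dF)).
have e2 v w z : O z -> 'D_w (fun y => 'D_v (fun z => c * F z) y) z =
    c * 'D_w (fun y => 'D_v F y) z.
  move=> Oz; rewrite (eqon_derive w oO (e1 v) Oz).
  have [_ [dF _]] := cF z Oz.
  by rewrite (deriveZ c (diff_derivable (dF v))).
move=> x Ox; have [dF1 [dF2 dF3]] := cF x Ox.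
split; first exact: differentiableZ' dF1.
split=> [v|v w].
  apply: near_eq_differentiable (eqon_near oO Ox (fun z Oz => esym (e1 v z Oz))) _.
  exact: differentiableZ' (dF2 v).
apply: near_eq_continuous (eqon_near oO Ox (fun z Oz => esym (e2 v w z Oz))) _.
apply: continuousZ; [exact: cst_continuous | exact: dF3].
Qed.

Lemma C2on_sum (O : set V) (I : Type) (s : seq I) (F : I -> V -> R) :
  open O -> (forall i, C2on O (F i)) -> C2on O (fun z => \sum_(i <- s) F i z).
Proof.
move=> oO cF; elim: s => [|i s IH].
  by apply: (C2on_eq oO _ (C2on_cst (O:=O) 0)) => z _; rewrite big_nil.
by apply: (C2on_eq oO _ (C2on_add oO (cF i) IH)) => z _; rewrite big_cons.
Qed.
End C2.



Section Aff.
Variable R : realType.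
Variable n : nat.
Notation V := 'rV[R]_n.

Lemma derive_coord (M v : V) k : 'D_v (fun N : V => N 0 k) M = v 0 k.
Proof.
rewrite deriveE; last exact: differentiable_coord.
have @f : {linear V -> R}.
  by exists (fun N : V => N 0 k); do 2![eexists]; do ?[constructor];
     rewrite ?mxE// => ? *; rewrite ?mxE//; move=> ?; rewrite !mxE.
rewrite (_ : (fun _ => _) = f) //; rewrite diff_lin //; exact: coord_continuous.
Qed.

Lemma derive_lin (F : V -> R) x v : differentiable F x ->
  'D_v F x = \sum_k v 0 k * 'D_(delta_mx 0 k) F x.
Proof.
move=> dF; rewrite deriveE // {1}(row_sum_delta v) linear_sum.
by apply: eq_bigr => k _; rewrite linearZ /= deriveE.
Qed.

Definition aff (a : 'I_n -> R) (b : R) (z : V) : R := \sum_k a k * z 0 k + b.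
Definition Lin (a : 'I_n -> R) (v : V) : R := \sum_k a k * v 0 k.

Lemma aff_fun a b : aff a b = \sum_k (fun z : V => a k * z 0 k) + cst b.
Proof. by apply/funext => z; rewrite /aff !fctE fct_sumE. Qed.

Lemma coord_lin_diff (c : R) k x : differentiable (fun z : V => c * z 0 k) x.
Proof. by apply: differentiableZ'; exact: differentiable_coord. Qed.

Lemma aff_diff a b x : differentiable (aff a b) x.
Proof.
rewrite aff_fun; apply: differentiableD; last exact: differentiable_cst.
apply: differentiable_sum => k; exact: coord_lin_diff.
Qed.

Lemma aff_derive a b x v : 'D_v (aff a b) x = Lin a v.
Proof.
rewrite aff_fun deriveD; last exact: derivable_cst.
  2: apply: diff_derivable; apply: differentiable_sum => k; exact: coord_lin_diff.
rewrite derive_cst addr0 derive_sum; last first.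
  by move=> k; apply: diff_derivable; exact: coord_lin_diff.
apply: eq_bigr => k _.
rewrite (deriveZ (a k) (diff_derivable (differentiable_coord _ 0 k))).
by rewrite derive_coord.
Qed.

Lemma aff_cont a b x : {for x, continuous (aff a b)}.
Proof. exact: differentiable_continuous (aff_diff a b x). Qed.

Lemma comp_aff_diff (phi : R -> R) a b x : derivable phi (aff a b x) 1 ->
  differentiable (fun z => phi (aff a b z)) x.
Proof.
move=> /derivable1_diffP d.
exact: (differentiable_comp (aff_diff a b x) d).
Qed.

Lemma comp_aff_derive (phi : R -> R) a b x v : derivable phi (aff a b x) 1 ->
  'D_v (fun z => phi (aff a b z)) x = Lin a v * derive1 phi (aff a b x).
Proof.
move=> d; have d' := d; move/derivable1_diffP: d' => d'.
rewrite deriveE; last exact: comp_aff_diff.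
rewrite (diff_comp (aff_diff a b x) d') /= diff1E // -deriveE; last exact: aff_diff.
by rewrite aff_derive.
Qed.

Lemma C2on_comp_aff (p1 p2 p3 : R -> R) a b :
  (forall t, 0 < t -> derivable p1 t 1 /\ derive1 p1 t = p2 t) ->
  (forall t, 0 < t -> derivable p2 t 1 /\ derive1 p2 t = p3 t) ->
  (forall t, 0 < t -> {for t, continuous p3}) ->
  C2on [set z | 0 < aff a b z] (fun z => p1 (aff a b z)).
Proof.
move=> H1 H2 H3.
have oO : open [set z : V | 0 < aff a b z].
  rewrite /=; apply: (@open_comp _ _ (aff a b) [set t | 0 < t]).
    by move=> z _; exact: aff_cont.
  exact: open_gt.
have e1 v z : 0 < aff a b z ->
   'D_v (fun z => p1 (aff a b z)) z = Lin a v * p2 (aff a b z).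
  by move=> Oz; have [d e] := H1 _ Oz; rewrite comp_aff_derive // e.
have e2 v w z : 0 < aff a b z ->
   'D_w (fun y => 'D_v (fun z => p1 (aff a b z)) y) z =
   Lin a v * (Lin a w * p3 (aff a b z)).
  move=> Oz; rewrite (eqon_derive w oO (e1 v) Oz).
  have [d e] := H2 _ Oz.
  by rewrite (deriveZ _ (diff_derivable (comp_aff_diff d))) comp_aff_derive // e.
move=> x Ox; split; first by apply: comp_aff_diff; have [] := H1 _ Ox.
split=> [v|v w].
  apply: near_eq_differentiable (eqon_near oO Ox (fun z Oz => esym (e1 v z Oz))) _.
  by apply: differentiableZ'; apply: comp_aff_diff; have [] := H2 _ Ox.
apply: near_eq_continuous (eqon_near oO Ox (fun z Oz => esym (e2 v w z Oz))) _.
apply: continuousM; first exact: cst_continuous.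
apply: continuousM; first exact: cst_continuous.
exact: (continuous_comp (@aff_cont a b x) (H3 _ Ox)).
Qed.
End Aff.



Section OneD.
Variable R : realType.

Lemma is_derive_to (f : R -> R) (t d : R) : is_derive t (1:R) f d ->
  derivable f t 1 /\ derive1 f t = d.
Proof. by move=> h; split; [exact: ex_derive | rewrite derive1E; exact: derive_val]. Qed.

Lemma H1_xlnx (t : R) : 0 < t ->
  derivable (fun u : R => u * ln u) t 1 /\ derive1 (fun u : R => u * ln u) t = ln t + 1.
Proof.
move=> t0; apply: is_derive_to.
have h := is_derive1_ln t0.
have hi : is_derive t 1 (@id R) 1 := is_derive_id t 1.
have := is_deriveM hi h.
move=> hh; suff -> : ln t + 1 = t *: t^-1 + (ln t)%:A by exact: hh.
by rewrite [t *: _]mulfV ?gt_eqF // [(ln t)%:A]mulr1 addrC.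
Qed.

Lemma H2_ln1 (t : R) : 0 < t ->
  derivable (fun u : R => ln u + 1) t 1 /\ derive1 (fun u : R => ln u + 1) t = t^-1.
Proof.
move=> t0; apply: is_derive_to.
have h := is_derive1_ln t0.
have := is_deriveD h (is_derive_cst (1:R) t 1).
by rewrite addr0.
Qed.

Lemma H3_inv (t : R) : 0 < t -> {for t, continuous (fun t : R => t^-1)}.
Proof. by move=> t0; apply: inv_continuous; rewrite gt_eqF. Qed.
End OneD.



Section GP.
Variable R : realType.
Variables n r : nat.
Variable nu : 'I_r -> 'I_n -> int.
Variable lam : 'I_r -> R.

Lemma ell_shift j (x : 'rV[R]_n) (t : R) :
  ell nu lam j (x - t *: \row_k (nu j k)%:~R) =
  ell nu lam j x - t * \sum_k ((nu j k)%:~R) ^+ 2.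
Proof.
rewrite /ell addrAC; congr (_ + _); rewrite big_distrr -sumrB.
by apply: eq_bigr => k _; rewrite !mxE mulrBr expr2; congr (_ - _); rewrite mulrCA.
Qed.

Lemma ell_pos_interior j (x : 'rV[R]_n) : interior (polytope nu lam) x ->
  (exists k, nu j k != 0) -> 0 < ell nu lam j x.
Proof.
move=> /nbhs_ballP [e /= e0 eP] [k0 nk0].
set a : 'rV[R]_n := \row_k (nu j k)%:~R.
set t : R := e / (2 * (`|a| + 1)).
have t0 : 0 < t by rewrite divr_gt0 // mulr_gt0 // ltr_wpDl.
have : polytope nu lam (x - t *: a).
  apply: eP; rewrite -ball_normE /= opprB addrC subrK normrZ gtr0_norm //.
  rewrite /t mulrAC ltr_pdivrMr ?mulr_gt0 ?ltr_wpDl //.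
have := normr_ge0 a; move=> ha; nra.
move=> /(_ j); rewrite ell_shift subr_ge0 => h; apply: lt_le_trans h.
apply: mulr_gt0 => //.
rewrite (bigD1 k0) //=.
have hp : 0 < ((nu j k0)%:~R : R) ^+ 2 by rewrite exprn_even_gt0 // intr_eq0.
have hs : 0 <= \sum_(k | k != k0) ((nu j k)%:~R : R) ^+ 2.
  by apply: sumr_ge0 => k _; exact: sqr_ge0.
lra.
Qed.
Lemma term_C2 j : C2on (interior (polytope nu lam))
  (fun z => ell nu lam j z * ln (ell nu lam j z)).
Proof.
have oO := @open_interior _ (polytope nu lam).
have [[k0 nk0]|allz] := pselect (exists k, nu j k != 0).
  apply: (@C2on_sub _ _ _ [set z | 0 < aff (fun k => (nu j k)%:~R) (lam j) z]).
    by move=> z Oz; exact: (ell_pos_interior Oz (ex_intro _ k0 nk0)).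
  exact: (C2on_comp_aff (@H1_xlnx R) (@H2_ln1 R) (@H3_inv R)).
have e z : ell nu lam j z = lam j.
  rewrite /ell big1 ?add0r // => k _.
  have [->|h] := eqVneq (nu j k) 0; first by rewrite mul0r.
  by exfalso; apply: allz; exists k.
apply: (C2on_eq oO _ (C2on_cst (O := interior (polytope nu lam)) (lam j * ln (lam j)))).
by move=> z _; rewrite e.
Qed.

Lemma gP_C2 : C2on (interior (polytope nu lam)) (gP nu lam).
Proof.
have oO := @open_interior _ (polytope nu lam).
apply: (C2on_scale _ oO); apply: (C2on_sum _ oO) => j; exact: term_C2.
Qed.
End GP.



Section FN.
Variable R : realType.
Variable n : nat.
Notation V := 'rV[R]_n.

Lemma derive_sum_fun m (h : 'I_m -> V -> R) x v :
  (forall k, differentiable (h k) x) ->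
  'D_v (fun z => \sum_k h k z) x = \sum_k 'D_v (h k) x.
Proof.
move=> dh; rewrite (_ : (fun z => _) = \sum_k h k); last first.
  by apply/funext => z; rewrite fct_sumE.
by rewrite derive_sum // => k; exact: diff_derivable.
Qed.

Lemma diff_sum_fun m (h : 'I_m -> V -> R) x :
  (forall k, differentiable (h k) x) ->
  differentiable (fun z => \sum_k h k z) x.
Proof.
move=> dh; rewrite (_ : (fun z => _) = \sum_k h k); last first.
  by apply/funext => z; rewrite fct_sumE.
exact: differentiable_sum.
Qed.

Lemma deriveM_fun (A B : V -> R) x v : differentiable A x -> differentiable B x ->
  'D_v (fun z => A z * B z) x = A x * 'D_v B x + B x * 'D_v A x.
Proof.
move=> dA dB; rewrite (_ : (fun z => _) = A * B); last by apply/funext.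
by rewrite deriveM //; exact: diff_derivable.
Qed.

Lemma diffM_fun (A B : V -> R) x : differentiable A x -> differentiable B x ->
  differentiable (fun z => A z * B z) x.
Proof.
move=> dA dB; rewrite (_ : (fun z => _) = A * B); last by apply/funext.
exact: differentiableM.
Qed.

Lemma diff_cminus (c : R) k x : differentiable (fun z : V => c - z 0 k) x.
Proof.
rewrite (_ : (fun z => _) = cst c - (fun z : V => z 0 k)); last by apply/funext.
apply: differentiableB; [exact: differentiable_cst|exact: differentiable_coord].
Qed.

Lemma derive_cminus (c : R) k x v : 'D_v (fun z : V => c - z 0 k) x = - v 0 k.
Proof.
rewrite (_ : (fun z => _) = cst c - (fun z : V => z 0 k)); last by apply/funext.
rewrite deriveB; [|exact: derivable_cst|exact: diff_derivable (differentiable_coord _ 0 k)].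
by rewrite derive_cst derive_coord sub0r.
Qed.

Definition fN (g : V -> R) (p : V) (z : V) := dotp (p - z) (grad g z) + g z.

Lemma fN_eq g p : fN g p =
  fun z => \sum_k (p 0 k - z 0 k) * 'D_(ebasis R k) g z + g z.
Proof.
apply/funext => z; rewrite /fN /dotp; congr (_ + _).
by apply: eq_bigr => k _; rewrite !mxE.
Qed.

Lemma fN_diff (O : set V) g p x : C2on O g -> O x -> differentiable (fN g p) x.
Proof.
move=> cg Ox; have [d1 [d2 _]] := cg x Ox.
rewrite fN_eq; apply: differentiableD => //.
apply: diff_sum_fun => k; apply: diffM_fun; [exact: diff_cminus|exact: d2].
Qed.

Lemma fN_derive (O : set V) g p x v : C2on O g -> O x ->
  'D_v (fN g p) x =
  \sum_k (p 0 k - x 0 k) * \sum_i v 0 i * hessian g x i k.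
Proof.
move=> cg Ox; have [d1 [d2 _]] := cg x Ox.
rewrite fN_eq deriveD; first last.
- exact: diff_derivable d1.
- apply: diff_derivable; apply: diff_sum_fun => k; apply: diffM_fun;
    [exact: diff_cminus|exact: d2].
rewrite derive_sum_fun; last first.
  by move=> k; apply: diffM_fun; [exact: diff_cminus|exact: d2].
rewrite (derive_lin v d1) -big_split /=; apply: eq_bigr => k _.
rewrite deriveM_fun; [|exact: diff_cminus|exact: d2].
rewrite derive_cminus (derive_lin v (d2 _)).
have -> : \sum_i v 0 i * 'D_(delta_mx 0 i) (fun z => 'D_(ebasis R k) g z) x =
          \sum_i v 0 i * hessian g x i k.
  by apply: eq_bigr => i _; rewrite /hessian mxE.
rewrite /ebasis; lra.
Qed.
End FN.



Section Ray.
Variable R : realType.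
Variable n : nat.
Notation V := 'rV[R]_n.

Lemma line_eq (F : V -> R) p v t :
  (fun h : R => h^-1 *: (((fun s : R => F (p + s *: v)) \o shift t) (h *: 1)
       - (fun s : R => F (p + s *: v)) t)) =
  (fun h : R => h^-1 *: ((F \o shift (p + t *: v)) (h *: v) - F (p + t *: v))).
Proof.
apply/funext => h /=; congr (_ *: (F _ - _)).
by rewrite [h *: 1]mulr1 scalerDl addrCA addrC.
Qed.

Lemma line_derive1 (F : V -> R) p v t :
  derive1 (fun s : R => F (p + s *: v)) t = 'D_v F (p + t *: v).
Proof. by rewrite derive1E /derive line_eq. Qed.

Lemma line_derivable (F : V -> R) p v t :
  derivable F (p + t *: v) v -> derivable (fun s : R => F (p + s *: v)) t 1.
Proof. by rewrite /derivable line_eq. Qed.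

Lemma qform (H : 'M[R]_n) (v : V) :
  (v *m H *m v^T) 0 0 = \sum_k v 0 k * \sum_i v 0 i * H i k.
Proof.
rewrite !mxE; apply: eq_bigr => k _; rewrite !mxE mulrC; congr (_ * _).

Qed.

Lemma ray_incr (O : set V) g p v t1 t2 : C2on O g -> 0 <= t1 -> t1 < t2 ->
  (forall t, 0 <= t <= t2 -> O (p + t *: v) /\ negdef (hessian g (p + t *: v))) ->
  v != 0 -> fN g p (p + t1 *: v) < fN g p (p + t2 *: v).
Proof.
move=> cg t10 t12 HO v0.
set phi := fun s : R => fN g p (p + s *: v).
have dphi t : t1 <= t <= t2 -> derivable phi t 1.
  move=> /andP[h1 h2]; apply: line_derivable; apply: diff_derivable.
  have [Ot _] := HO t (ltac:(apply/andP; split => //; lra)).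
  exact: fN_diff cg Ot.
have := @gtr0_derive1_lt_cc R phi t1 t2.
apply.
- move=> t; rewrite in_itv /= => /andP[h1 h2]; apply: dphi; apply/andP; split; lra.
- move=> t; rewrite in_itv /= => /andP[h1 h2].
  have [Ot Nt] := HO t (ltac:(apply/andP; split => //; lra)).
  rewrite /phi line_derive1 (fN_derive _ _ cg Ot).
  have -> : \sum_k (p 0 k - (p + t *: v) 0 k) * \sum_i v 0 i * hessian g (p + t *: v) i k
      = - t * (v *m hessian g (p + t *: v) *m v^T) 0 0.
    rewrite qform big_distrr /=; apply: eq_bigr => k _; rewrite !mxE; ring.
  have := Nt v v0; move=> q; nra.
- apply: derivable_within_continuous => t; rewrite in_itv /= => h; exact: dphi.
- by rewrite in_itv /= lexx (ltW t12).
- by rewrite in_itv /= lexx (ltW t12).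
- exact: t12.
Qed.
End Ray.



Section ND.
Variable R : realType.
Variable n : nat.

Lemma coord_le_norm (v : 'rV[R]_n) i : `|v 0 i| <= `|v|.
Proof.
change (`|v 0 i| <= mx_norm v); rewrite mx_normrE.
by rewrite (bigD1 (0, i)) //= le_max lexx.
Qed.

Lemma qhom (M : 'M[R]_n) (v : 'rV[R]_n) a :
  ((a *: v) *m M *m (a *: v)^T) 0 0 = a ^+ 2 * (v *m M *m v^T) 0 0.
Proof.
rewrite !qform big_distrr /=; apply: eq_bigr => k _.
rewrite !mxE big_distrr [in RHS]big_distrr /= big_distrr /=.
apply: eq_bigr => i _; rewrite !mxE; ring.
Qed.

Lemma q_cont (M : 'M[R]_n) : continuous (fun v : 'rV[R]_n => (v *m M *m v^T) 0 0).
Proof.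
move=> v; apply: differentiable_continuous.
rewrite (_ : (fun v => _) = fun v : 'rV[R]_n => \sum_k v 0 k * \sum_i v 0 i * M i k);
  last by apply/funext => w; rewrite qform.
apply: diff_sum_fun => k; apply: diffM_fun; first exact: differentiable_coord.
apply: diff_sum_fun => i; apply: diffM_fun; first exact: differentiable_coord.
exact: differentiable_cst.
Qed.
End ND.

Lemma negdef_near (R : realType) n (H : 'rV[R]_n -> 'M[R]_n) x :
  (forall i k, {for x, continuous (fun z => H z i k)}) -> negdef (H x) ->
  \forall z \near x, negdef (H z).
Proof.
case: n H x => [|n] H x hc hN.
  by near=> z; move=> v; rewrite [v]thinmx0 eqxx.
set q := fun v : 'rV[R]_n.+1 => (v *m H x *m v^T) 0 0.
set S := [set v : 'rV[R]_n.+1 | `|v| = 1].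
have S0 : S !=set0.
  set w : 'rV[R]_n.+1 := const_mx 1.
  have w0 : w != 0.
    by apply/eqP => /matrixP /(_ 0 0); rewrite !mxE; apply/eqP; exact: oner_neq0.
  exists (`|w|^-1 *: w); rewrite /S /= normrZ normfV normr_id mulVf //.
  by rewrite normr_eq0.
have cS : compact S.
  apply: bounded_closed_compact.
    rewrite /= /bounded_near; near=> M => v /= ->; near: M.
    by apply: nbhs_pinfty_ge; rewrite num_real.
  have -> : S = (fun v : 'rV[R]_n.+1 => `|v|) @^-1` [set 1] by [].
  apply: preimage_closed; last exact: closed_eq.
  by move=> v _; exact: norm_continuous.
have [c Sc cmax] := EVT_max_rV S0 cS (continuous_subspaceT (@q_cont R n.+1 (H x))).
move: Sc; rewrite inE /S /= => Sc.
have c0 : c != 0 by apply/eqP => c0; move: Sc; rewrite c0 normr0 => /eqP; rewrite eq_sym oner_eq0.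
have qc0 : q c < 0 := hN c c0.
set d := - q c.
have d0 : 0 < d by rewrite /d oppr_gt0.
have qbound v : q v <= - d * `|v| ^+ 2.
  have [->|v0] := eqVneq v 0.
    by rewrite /q mul0mx mul0mx mxE normr0 expr0n /= mulr0.
  have nv : 0 < `|v| by rewrite normr_gt0.
  set u := `|v|^-1 *: v.
  have Su : u \in S.
    by rewrite inE /S /u /= normrZ normfV normr_id mulVf // gt_eqF.
  have vE : v = `|v| *: u by rewrite /u scalerA mulfV ?gt_eqF // scale1r.
  have := cmax u Su; rewrite -/(q u) -/(q c) -/d => hu.
  rewrite {1}vE /q qhom -/(q u).
  have : q u <= - d by rewrite /d opprK.
  have : 0 < `|v| ^+ 2 by rewrite exprn_gt0.
  move=> h1 h2; nra.
set N : R := (n.+1)%:R.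
have N0 : 0 < N by rewrite ltr0n.
set dl := d / (2 * N * N).
have dl0 : 0 < dl by rewrite divr_gt0 // !mulr_gt0.
have near_all : \forall z \near x, forall i k, `|H z i k - H x i k| < dl.
  have nF : Filter (nbhs x) by apply: nbhs_filter.
  apply: (@filter_forall _ _ (fun i z => forall k, `|H z i k - H x i k| < dl) _ nF) => i.
  apply: (@filter_forall _ _ (fun k z => `|H z i k - H x i k| < dl) _ nF) => k.
  have := (cvgrPdist_lt (fun z => H z i k) (H x i k)).1 (hc i k) dl dl0.
  by move=> h; near=> z; rewrite distrC; near: z; exact: h.
near=> z; move=> v v0.
have hz : forall i k, `|H z i k - H x i k| < dl by near: z.
have nv : 0 < `|v| by rewrite normr_gt0.
set E := \sum_k \sum_i v 0 k * (v 0 i * (H z i k - H x i k)).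
have qzE : (v *m H z *m v^T) 0 0 = q v + E.
  rewrite /q /E !qform -big_split /=; apply: eq_bigr => k _.
  rewrite !big_distrr -big_split /=; apply: eq_bigr => i _; ring.
have Eb : `|E| <= N * (N * (`|v| ^+ 2 * dl)).
  apply: (le_trans (ler_norm_sum _ _ _)).
  have cs : forall X : R, \sum_(k < n.+1) X = N * X.
    by move=> X; rewrite sumr_const card_ord /N mulr_natl.
  rewrite -cs.
  apply: ler_sum => k _; rewrite /=.
  apply: (le_trans (ler_norm_sum _ _ _)).
  rewrite -cs; apply: ler_sum => i _.
  rewrite !normrM expr2 -mulrA; apply: ler_pM => //.
    exact: coord_le_norm.
  apply: ler_pM => //; first exact: coord_le_norm.
  exact: ltW.
have hq := qbound v.
have hNE : N * (N * (`|v| ^+ 2 * dl)) = d / 2 * `|v| ^+ 2.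
  by rewrite /dl; field; rewrite addrC natr1 pnatr_eq0.
have hE : E <= d / 2 * `|v| ^+ 2.
  by rewrite -hNE; exact: le_trans (ler_norm E) Eb.
rewrite qzE.
have p2 : 0 < `|v| ^+ 2 by rewrite exprn_gt0.
move: hq hE p2; set a := `|v| ^+ 2 => hq hE p2.
have hda : 0 < d * a := mulr_gt0 d0 p2.
have : d / 2 * a = (d * a) / 2 by rewrite mulrAC.
lra.
Unshelve. all: by end_near.
Qed.





Lemma smooth_C2 (R : realType) n (psi : 'rV[R]_n -> R) : smooth psi -> C2on setT psi.
Proof.
move=> hs x _; split; first exact: (hs [::] x).
split=> [v|v w]; first exact: (hs [:: v] x).
apply: differentiable_continuous; exact: (hs [:: w; v] x).
Qed.

Theorem mainTheorem12 (R : realType) (n r : nat)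
  (nu : 'I_r -> 'I_n -> int) (lam : 'I_r -> R) (psi : 'rV[R]_n -> R)
  (s : R) (m : 'I_n -> int) (U : set 'rV[R]_n) :
  delzant nu lam ->
  smooth psi ->
  (forall x, polytope nu lam x -> posdef (hessian psi x)) ->
  (exists sneg, is_sneg nu lam psi sneg /\ s < - sneg) ->
  polytope nu lam (intpt R m) ->
  island nu lam psi s U ->
  U (intpt R m) ->
  (\forall x \near intpt R m,
      sigma_norm nu lam psi s m (intpt R m) <= sigma_norm nu lam psi s m x) /\
  (forall x : 'rV[R]_n,
      (forall t : R, 0 <= t <= 1 -> U (intpt R m + t *: (x - intpt R m))) ->
      sigma_norm nu lam psi s m (intpt R m) <= sigma_norm nu lam psi s m x) /\
  (forall (v : 'rV[R]_n) (t1 t2 : R), v != 0 -> 0 <= t1 -> t1 < t2 ->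
      (forall t, 0 <= t <= t2 -> U (intpt R m + t *: v)) ->
      sigma_norm nu lam psi s m (intpt R m + t1 *: v)
        < sigma_norm nu lam psi s m (intpt R m + t2 *: v)).
Proof.
move=> _ hpsi _ _ _ [x0 [Ax0 UE]] Up.
set p := intpt R m.
set O := interior (polytope nu lam).
set g := gs nu lam psi s.
have oO : open O := @open_interior _ _.
have cg : C2on O g.
  rewrite /g /gs; apply: (C2on_add oO (@gP_C2 _ _ _ nu lam)).
  apply: (C2on_scale s oO); apply: (C2on_sub (O' := setT)) => //.
  exact: smooth_C2.
have sigE x : sigma_norm nu lam psi s m x = expR (fN g p x).
  rewrite /sigma_norm /fN. reflexivity.
have UA : U `<=` negdef_region nu lam psi s.
  by rewrite UE; exact: connected_component_sub.
have C3 : forall (v : 'rV[R]_n) (t1 t2 : R), v != 0 -> 0 <= t1 -> t1 < t2 ->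
      (forall t, 0 <= t <= t2 -> U (p + t *: v)) ->
      sigma_norm nu lam psi s m (p + t1 *: v)
        < sigma_norm nu lam psi s m (p + t2 *: v).
  move=> v t1 t2 v0 t10 t12 hU; rewrite !sigE ltr_expR.
  apply: (@ray_incr R n O g p v t1 t2 cg t10 t12 _ v0) => t ht.
  exact: (UA _ (hU t ht)).
have C2 : forall x : 'rV[R]_n,
      (forall t : R, 0 <= t <= 1 -> U (p + t *: (x - p))) ->
      sigma_norm nu lam psi s m p <= sigma_norm nu lam psi s m x.
  move=> x hU; have [->|xp] := eqVneq x p; first exact: lexx.
  have := C3 (x - p) 0 1; rewrite scale0r addr0 scale1r [p + (x - p)]addrC subrK.
  by move=> h; apply/ltW/h => //; rewrite subr_eq0.
split; last by split; [exact: C2|exact: C3].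
have Ap : negdef_region nu lam psi s p := UA _ Up.
have Nnear : \forall z \near p, negdef (hessian g z).
  apply: negdef_near; last exact: Ap.2.
  move=> i k; have [_ [_ d3]] := cg p Ap.1.
  rewrite (_ : (fun z => hessian g z i k) =
     (fun z => 'D_(ebasis R i) (fun y => 'D_(ebasis R k) g y) z)); last first.
    by apply/funext => z; rewrite mxE.
  exact: d3.
have Anear : \forall z \near p, negdef_region nu lam psi s z.
  have Onear : \forall z \near p, O z := open_near oO Ap.1.
  by near=> z; split; near: z.
have /nbhs_ballP [e e0 eA] := Anear.
apply/nbhs_ballP; exists e => // x bx; apply: C2 => t ht.
have cU : connected_component (negdef_region nu lam psi s) x0 p by rewrite -UE.
rewrite UE (same_connected_component cU).
set S := (fun u : R => p + u *: (x - p)) @` `[0, 1].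
apply: (@connected_component_max _ _ S).
- by exists 0; [rewrite /= in_itv /= lexx ler01|rewrite scale0r addr0].
- move=> y [u hu <-]; apply: eA.
  move: hu; rewrite /= in_itv /= => /andP[u0 u1].
  rewrite -ball_normE /= opprD addrA subrr sub0r normrN normrZ ger0_norm //.
  move: bx; rewrite -ball_normE /= distrC => bx.
  have := normr_ge0 (x - p); nra.
- apply: connected_continuous_connected; first exact: segment_connected.
  apply: continuous_subspaceT => u; apply: cvgD; first exact: cvg_cst.
  exact: scalel_continuous.
- by exists t => //; rewrite /= in_itv /=.
Unshelve. all: by end_near.
Qed.
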